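(* Let $a,b,c$ be real polynomials of total degree at most $2$, $d,e$ of total degree at most $1$, $\Phi=\begin{pmatrix}a&b\\ b&c\end{pmatrix}$, $L[p]=ap_{xx}+2bp_{xy}+cp_{yy}+dp_x+ep_y$, and let $\omega$ be a nontrivial symmetry factor of $L$. Assume there exist $2\times2$ matrices $\Psi_0,\Psi_1$ with entries polynomials of total degree at most $1$ such that $(a\Phi)_x+(b\Phi)_y=\Phi\Psi_0$ and $(b\Phi)_x+(c\Phi)_y=\Phi\Psi_1$. Let $n\ge1$ and let $A_n$ be an arbitrary $(n+1)\times(m+1)$ matrix of polynomials. Then $$\operatorname{div}^{\{n\}}\big(\Phi^{\{n\}}A_n\,\omega\big)=\operatorname{div}^{\{n-1\}}\big(\Phi^{\{n-1\}}A_{n-1}\,\omega\big),$$ where $A_{n-1}$ is an $n\times(m+1)$ polynomial matrix satisfying $\deg A_{n-1}\le\deg A_n+1$.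
   Context: A symmetry factor of $L$ is a nontrivial $C^2$ function $\omega$ on an open set with $\omega L[f]=(a\omega f)_{xx}+2(b\omega f)_{xy}+(c\omega f)_{yy}-(d\omega f)_x-(e\omega f)_y$ for all smooth $f$. $\Phi^{\{n\}}=(\phi^{\{n\}}_{i,j})_{i,j=0}^n$ is the second kind Kronecker power: $z_1^{n-i}z_2^i=\sum_j\phi^{\{n\}}_{i,j}t_1^{n-j}t_2^j$ with $z_1=at_1+bt_2$, $z_2=bt_1+ct_2$; $\Phi^{\{0\}}=1$. For matrices $B_0,\dots,B_n$ of equal size $h\times k$, $\operatorname{div}^{\{n\}}(B_0,\dots,B_n)^t=\sum_{i=0}^n\binom ni\partial_x^{n-i}\partial_y^iB_i$, where an $((n+1)h)\times k$ matrix is read as the stack of its consecutive $h\times k$ blocks (here $h=1$, the blocks are rows); $\operatorname{div}^{\{0\}}$ is the identity. The degree of a polynomial matrix is the maximum total degree of its entries. *)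

(* Defs.v *)
From Stdlib Require Import Reals List.
From Coquelicot Require Import Hierarchy Continuity Derive.
Import ListNotations.
Open Scope R_scope.

Definition fn2 := R -> R -> R.

Definition px (f : fn2) : fn2 := fun x y => Derive (fun t => f t y) x.
Definition py (f : fn2) : fn2 := fun x y => Derive (fun t => f x t) y.

Fixpoint dword (w : list bool) (f : fn2) : fn2 :=
  match w with
  | nil => f
  | b :: w' => (if b then px else py) (dword w' f)
  end.

Definition Ck_on (k : nat) (U : R * R -> Prop) (f : fn2) : Prop :=
  forall (w : list bool) (x y : R), (length w <= k)%nat -> U (x, y) ->
    continuous (fun p : R * R => dword w f (fst p) (snd p)) (x, y) /\
    ((length w < k)%nat ->
       ex_derive (fun t => dword w f t y) x /\ ex_derive (fun t => dword w f x t) y).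

Definition smooth_on (U : R * R -> Prop) (f : fn2) : Prop := forall k, Ck_on k U f.

Definition is_poly_le (k : nat) (p : fn2) : Prop :=
  exists coef : nat -> nat -> R, forall x y,
    p x y = sum_f_R0 (fun i => sum_f_R0 (fun j => coef i j * x ^ i * y ^ j) (k - i)) k.

Definition fmul (f g : fn2) : fn2 := fun x y => f x y * g x y.

Definition Lop (a b c d e : fn2) (f : fn2) : fn2 := fun x y =>
  a x y * px (px f) x y + 2 * b x y * px (py f) x y + c x y * py (py f) x y
  + d x y * px f x y + e x y * py f x y.

Definition symmetry_factor (a b c d e : fn2) (U : R * R -> Prop) (omega : fn2) : Prop :=
  open U /\ Ck_on 2 U omega /\ (exists x y, U (x, y) /\ omega x y <> 0) /\
  forall f : fn2, smooth_on U f -> forall x y, U (x, y) ->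
    omega x y * Lop a b c d e f x y =
      px (px (fmul a (fmul omega f))) x y
      + 2 * px (py (fmul b (fmul omega f))) x y
      + py (py (fmul c (fmul omega f))) x y
      - px (fmul d (fmul omega f)) x y
      - py (fmul e (fmul omega f)) x y.

Definition Phi2 (a b c : fn2) (r s : nat) : fn2 :=
  match r, s with
  | O, O => a
  | S O, S O => c
  | _, _ => b
  end.

(* phi = Phi^{n} (second kind Kronecker power), characterized as in the paper:
   z1^(n-i) z2^i = sum_j phi_{i,j} t1^(n-j) t2^j with z1 = a t1 + b t2,
   z2 = b t1 + c t2, for all i <= n (pointwise in (x, y), identically in t1, t2). *)
Definition kron2_spec (a b c : fn2) (n : nat) (phi : nat -> nat -> fn2) : Prop :=
  forall (i : nat) (x y t1 t2 : R), (i <= n)%nat ->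
    (a x y * t1 + b x y * t2) ^ (n - i) * (b x y * t1 + c x y * t2) ^ i =
    sum_f_R0 (fun j => phi i j x y * t1 ^ (n - j) * t2 ^ j) n.

(* div^{n} of a column (B_0, ..., B_n) of scalar functions (h = 1):
   sum_i binom(n,i) d_x^{n-i} d_y^i B_i. Applied columnwise to matrices. *)
Definition divn (n : nat) (B : nat -> fn2) : fn2 := fun x y =>
  sum_f_R0 (fun i => Binomial.C n i * Nat.iter (n - i) px (Nat.iter i py (B i)) x y) n.

(* Entry (i, k) of the matrix Phi^{n} A omega, with Phi^{n} of size (n+1)x(n+1). *)
Definition matPAw (n : nat) (phi A : nat -> nat -> fn2) (omega : fn2) (i k : nat) : fn2 :=
  fun x y => sum_f_R0 (fun j => phi i j x y * A j k x y) n * omega x y.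

(* Main.v *)
Require Import Defs.
From Stdlib Require Import Reals List Lia Lra FunctionalExtensionality.
From Coquelicot Require Import Hierarchy Continuity Derive.
From Coquelicot Require Import Coquelicot.
Import ListNotations.
Open Scope R_scope.

Lemma loc_x (U : R * R -> Prop) x y : open U -> U (x, y) -> locally x (fun t => U (t, y)).
Proof.
  intros HU Hxy.
  apply (locally_2d_1d_const_y (fun u v => U (u, v))).
  apply locally_2d_locally.
  apply HU in Hxy. revert Hxy. apply filter_imp. intros [u v]; auto.
Qed.

Lemma loc_y (U : R * R -> Prop) x y : open U -> U (x, y) -> locally y (fun t => U (x, t)).
Proof.
  intros HU Hxy.
  apply (locally_2d_1d_const_x (fun u v => U (u, v))).
  apply locally_2d_locally.
  apply HU in Hxy. revert Hxy. apply filter_imp. intros [u v]; auto.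
Qed.

Lemma dword_app w b f : dword (w ++ [b]) f = dword w ((if b then px else py) f).
Proof. induction w as [|c w IH]; simpl; auto. rewrite IH; auto. Qed.

Lemma dword_cat w1 w2 f : dword (w1 ++ w2) f = dword w1 (dword w2 f).
Proof. induction w1 as [|c w IH]; simpl; auto. rewrite IH; auto. Qed.

Definition C0pt (U : R * R -> Prop) (f : fn2) := forall x y, U (x, y) ->
  continuous (fun p : R * R => f (fst p) (snd p)) (x, y) /\
  ex_derive (fun t => f t y) x /\ ex_derive (fun t => f x t) y.

Lemma Ck_S k U f : Ck_on (S k) U f <-> C0pt U f /\ Ck_on k U (px f) /\ Ck_on k U (py f).
Proof.
  split.
  - intros H. split; [|split].
    + intros x y Hu. destruct (H nil x y) as [H1 H2]; simpl; try lia; auto.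
      split; auto. apply H2. simpl; lia.
    + intros w' x y Hl Hu. rewrite <- (dword_app w' true).
      assert (length (w' ++ [true]) <= S k)%nat by (rewrite length_app; simpl; lia).
      destruct (H (w' ++ [true]) x y) as [A B]; auto.
      split; auto. intros Hl'. apply B. rewrite length_app; simpl; lia.
    + intros w' x y Hl Hu. rewrite <- (dword_app w' false).
      assert (length (w' ++ [false]) <= S k)%nat by (rewrite length_app; simpl; lia).
      destruct (H (w' ++ [false]) x y) as [A B]; auto.
      split; auto. intros Hl'. apply B. rewrite length_app; simpl; lia.
  - intros [H0 [Hx Hy]] w x y Hl Hu.
    destruct w as [|b w] using rev_ind.
    + destruct (H0 x y Hu) as [A [B C]]; simpl; auto.
    + rewrite dword_app. rewrite length_app in Hl; simpl in Hl.
      destruct b; [destruct (Hx w x y) as [A B] | destruct (Hy w x y) as [A B]];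
        auto; try lia; split; auto; intros Hl'; apply B; rewrite length_app in Hl'; simpl in Hl'; lia.
Qed.

Lemma Ck_0 U f : Ck_on 0 U f <-> (forall x y, U (x, y) -> continuous (fun p : R * R => f (fst p) (snd p)) (x, y)).
Proof.
  split.
  - intros H x y Hu. apply (H nil); simpl; auto.
  - intros H w x y Hl Hu. destruct w; simpl in Hl; try lia. simpl. split; auto. lia.
Qed.

Lemma Ck_mono k U f : Ck_on (S k) U f -> Ck_on k U f.
Proof. intros H w x y Hl Hu. split. apply H; auto. intros. apply H; auto. Qed.

Lemma Ck_mono_le k l U f : (l <= k)%nat -> Ck_on k U f -> Ck_on l U f.
Proof. intros Hle. induction Hle; auto. intros. apply IHHle, Ck_mono; auto. Qed.

Lemma dword_ext U f g : open U -> (forall x y, U (x, y) -> f x y = g x y) ->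
  forall w x y, U (x, y) -> dword w f x y = dword w g x y.
Proof.
  intros HU Hfg w. induction w as [|b w IH]; intros x y Hu; simpl; auto.
  destruct b; unfold px, py.
  - apply Derive_ext_loc. generalize (loc_x U x y HU Hu). apply filter_imp.
    intros t Ht; auto.
  - apply Derive_ext_loc. generalize (loc_y U x y HU Hu). apply filter_imp.
    intros t Ht; auto.
Qed.

Lemma Ck_ext k U f g : open U -> (forall x y, U (x, y) -> f x y = g x y) ->
  Ck_on k U f -> Ck_on k U g.
Proof.
  intros HU Hfg H w x y Hl Hu. destruct (H w x y Hl Hu) as [H1 H2]. split.
  - apply (continuous_ext_loc _ (fun p : R * R => dword w f (fst p) (snd p))).
    + generalize (HU _ Hu). apply filter_imp. intros [u v] Huv; simpl.
      apply (dword_ext U f g HU Hfg); auto.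
    + auto.
  - intros Hl'. destruct (H2 Hl') as [A B]. split.
    + apply (ex_derive_ext_loc (fun t => dword w f t y)); auto.
      generalize (loc_x U x y HU Hu). apply filter_imp. intros t Ht.
      apply (dword_ext U f g HU Hfg); auto.
    + apply (ex_derive_ext_loc (fun t => dword w f x t)); auto.
      generalize (loc_y U x y HU Hu). apply filter_imp. intros t Ht.
      apply (dword_ext U f g HU Hfg); auto.
Qed.

Definition fplus (f g : fn2) : fn2 := fun x y => f x y + g x y.

Lemma px_plus f g x y : ex_derive (fun t => f t y) x -> ex_derive (fun t => g t y) x ->
  px (fplus f g) x y = px f x y + px g x y.
Proof. intros. unfold px, fplus. apply (Derive_plus (fun t => f t y) (fun t => g t y)); auto. Qed.
Lemma py_plus f g x y : ex_derive (fun t => f x t) y -> ex_derive (fun t => g x t) y ->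
  py (fplus f g) x y = py f x y + py g x y.
Proof. intros. unfold py, fplus. apply (Derive_plus (fun t => f x t) (fun t => g x t)); auto. Qed.
Lemma px_mul f g x y : ex_derive (fun t => f t y) x -> ex_derive (fun t => g t y) x ->
  px (fmul f g) x y = px f x y * g x y + f x y * px g x y.
Proof. intros. unfold px, fmul. apply (Derive_mult (fun t => f t y) (fun t => g t y)); auto. Qed.
Lemma py_mul f g x y : ex_derive (fun t => f x t) y -> ex_derive (fun t => g x t) y ->
  py (fmul f g) x y = py f x y * g x y + f x y * py g x y.
Proof. intros. unfold py, fmul. apply (Derive_mult (fun t => f x t) (fun t => g x t)); auto. Qed.

Lemma C0pt_plus U f g : C0pt U f -> C0pt U g -> C0pt U (fplus f g).
Proof.
  intros Hf Hg x y Hu. destruct (Hf x y Hu) as [A [B C]]. destruct (Hg x y Hu) as [A' [B' C']].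
  split; [|split]; unfold fplus.
  - apply (continuous_plus (fun p : R*R => f (fst p) (snd p)) (fun p : R*R => g (fst p) (snd p))); auto.
  - apply (ex_derive_plus (fun t => f t y) (fun t => g t y)); auto.
  - apply (ex_derive_plus (fun t => f x t) (fun t => g x t)); auto.
Qed.

Lemma C0pt_mul U f g : C0pt U f -> C0pt U g -> C0pt U (fmul f g).
Proof.
  intros Hf Hg x y Hu. destruct (Hf x y Hu) as [A [B C]]. destruct (Hg x y Hu) as [A' [B' C']].
  split; [|split]; unfold fmul.
  - apply (continuous_mult (fun p : R*R => f (fst p) (snd p)) (fun p : R*R => g (fst p) (snd p))); auto.
  - apply (ex_derive_mult (fun t => f t y) (fun t => g t y)); auto.
  - apply (ex_derive_mult (fun t => f x t) (fun t => g x t)); auto.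
Qed.

Lemma Ck_C0pt k U f : Ck_on (S k) U f -> C0pt U f.
Proof. intros H; apply Ck_S in H; tauto. Qed.

Lemma Ck_plus k U f g : open U -> Ck_on k U f -> Ck_on k U g -> Ck_on k U (fplus f g).
Proof.
  intros HU. revert f g. induction k as [|k IH]; intros f g Hf Hg.
  - rewrite Ck_0 in Hf, Hg. apply Ck_0. intros x y Hu.
    exact (continuous_plus (fun p : R*R => f (fst p) (snd p)) (fun p : R*R => g (fst p) (snd p)) (x,y) (Hf x y Hu) (Hg x y Hu)).
  - apply Ck_S in Hf as [H0 [Hx Hy]]. apply Ck_S in Hg as [G0 [Gx Gy]].
    apply Ck_S. split; [|split].
    + apply C0pt_plus; auto.
    + apply (Ck_ext k U (fplus (px f) (px g))); auto.
      intros x y Hu. destruct (H0 x y Hu) as [_ [A1 A2]]. destruct (G0 x y Hu) as [_ [B1 B2]].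
      symmetry. apply px_plus; assumption.
    + apply (Ck_ext k U (fplus (py f) (py g))); auto.
      intros x y Hu. destruct (H0 x y Hu) as [_ [A1 A2]]. destruct (G0 x y Hu) as [_ [B1 B2]].
      symmetry. apply py_plus; assumption.
Qed.

Lemma Ck_mul k U f g : open U -> Ck_on k U f -> Ck_on k U g -> Ck_on k U (fmul f g).
Proof.
  intros HU. revert f g. induction k as [|k IH]; intros f g Hf Hg.
  - rewrite Ck_0 in Hf, Hg. apply Ck_0. intros x y Hu.
    exact (continuous_mult (fun p : R*R => f (fst p) (snd p)) (fun p : R*R => g (fst p) (snd p)) (x,y) (Hf x y Hu) (Hg x y Hu)).
  - pose proof (Ck_mono _ _ _ Hf) as Hf'. pose proof (Ck_mono _ _ _ Hg) as Hg'.
    apply Ck_S in Hf as [H0 [Hx Hy]]. apply Ck_S in Hg as [G0 [Gx Gy]].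
    apply Ck_S. split; [|split].
    + apply C0pt_mul; auto.
    + apply (Ck_ext k U (fplus (fmul (px f) g) (fmul f (px g)))); auto.
      intros x y Hu. destruct (H0 x y Hu) as [_ [A1 A2]]. destruct (G0 x y Hu) as [_ [B1 B2]].
      symmetry. apply px_mul; assumption.
      apply Ck_plus; auto.
    + apply (Ck_ext k U (fplus (fmul (py f) g) (fmul f (py g)))); auto.
      intros x y Hu. destruct (H0 x y Hu) as [_ [A1 A2]]. destruct (G0 x y Hu) as [_ [B1 B2]].
      symmetry. apply py_mul; assumption.
      apply Ck_plus; auto.
Qed.

Lemma px_const c : px (fun _ _ => c) = (fun _ _ => 0).
Proof. unfold px. do 2 (apply functional_extensionality; intro). apply Derive_const. Qed.
Lemma py_const c : py (fun _ _ => c) = (fun _ _ => 0).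
Proof. unfold py. do 2 (apply functional_extensionality; intro). apply Derive_const. Qed.
Lemma px_X : px (fun x _ => x) = (fun _ _ => 1).
Proof. unfold px. do 2 (apply functional_extensionality; intro). apply Derive_id. Qed.
Lemma py_X : py (fun x _ => x) = (fun _ _ => 0).
Proof. unfold py. do 2 (apply functional_extensionality; intro). apply Derive_const. Qed.
Lemma px_Y : px (fun _ y => y) = (fun _ _ => 0).
Proof. unfold px. do 2 (apply functional_extensionality; intro). apply Derive_const. Qed.
Lemma py_Y : py (fun _ y => y) = (fun _ _ => 1).
Proof. unfold py. do 2 (apply functional_extensionality; intro). apply Derive_id. Qed.

Lemma Ck_const k U c : Ck_on k U (fun _ _ => c).
Proof.
  revert c. induction k as [|k IH]; intros c.
  - apply Ck_0. intros. apply continuous_const.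
  - apply Ck_S. rewrite px_const, py_const. split; [|split]; auto.
    intros x y Hu. split; [|split]. apply continuous_const. apply ex_derive_const. apply ex_derive_const.
Qed.

Lemma Ck_X k U : Ck_on k U (fun x _ => x).
Proof.
  destruct k as [|k].
  - apply Ck_0. intros. apply continuous_fst.
  - apply Ck_S. rewrite px_X, py_X. split; [|split]; try apply Ck_const.
    intros x y Hu. split; [|split]. apply continuous_fst. apply ex_derive_id. apply ex_derive_const.
Qed.

Lemma Ck_Y k U : Ck_on k U (fun _ y => y).
Proof.
  destruct k as [|k].
  - apply Ck_0. intros. apply continuous_snd.
  - apply Ck_S. rewrite px_Y, py_Y. split; [|split]; try apply Ck_const.
    intros x y Hu. split; [|split]. apply continuous_snd. apply ex_derive_const. apply ex_derive_id.
Qed.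

Lemma Schwarz_U U f x y : open U -> Ck_on 2 U f -> U (x, y) -> px (py f) x y = py (px f) x y.
Proof.
  intros HU Hf Hu. unfold px, py.
  apply Schwarz.
  - apply locally_2d_locally. generalize (HU _ Hu). apply filter_imp.
    intros [u v] Huv; simpl.
    destruct (Hf nil u v) as [_ E0]; [simpl; lia| exact Huv|].
    destruct (Hf [false] u v) as [_ E1]; [simpl; lia| exact Huv|].
    destruct (Hf [true] u v) as [_ E2]; [simpl; lia| exact Huv|].
    destruct (E0 ltac:(simpl; lia)) as [A1 A2].
    destruct (E1 ltac:(simpl; lia)) as [B1 B2].
    destruct (E2 ltac:(simpl; lia)) as [C1 C2].
    simpl in *. unfold px, py in *.
    split; [exact A1|split; [exact A2|split; [exact B1|exact C2]]].
  - apply continuity_2d_pt_filterlim.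
    destruct (Hf [true; false] x y) as [E _]; [simpl; lia| exact Hu|]. exact E.
  - apply continuity_2d_pt_filterlim.
    destruct (Hf [false; true] x y) as [E _]; [simpl; lia| exact Hu|]. exact E.
Qed.

Lemma iter_px_dword m g : Nat.iter m px g = dword (repeat true m) g.
Proof. induction m as [|m IH]; simpl; auto. rewrite IH; auto. Qed.
Lemma iter_py_dword m g : Nat.iter m py g = dword (repeat false m) g.
Proof. induction m as [|m IH]; simpl; auto. rewrite IH; auto. Qed.

Lemma Ck_px k U f : Ck_on (S k) U f -> Ck_on k U (px f).
Proof. intros H; apply Ck_S in H; tauto. Qed.
Lemma Ck_py k U f : Ck_on (S k) U f -> Ck_on k U (py f).
Proof. intros H; apply Ck_S in H; tauto. Qed.

Lemma Ck_iter_py i k U f : Ck_on (i + k) U f -> Ck_on k U (Nat.iter i py f).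
Proof.
  revert k. induction i as [|i IH]; intros k H; simpl; auto.
  apply Ck_py. apply IH. rewrite Nat.add_succ_r; auto.
Qed.

Lemma comm_py_px i U f : open U -> Ck_on (S i) U f ->
  forall x y, U (x, y) -> Nat.iter i py (px f) x y = px (Nat.iter i py f) x y.
Proof.
  intros HU. induction i as [|i IH]; intros Hf x y Hu; simpl; auto.
  transitivity (py (px (Nat.iter i py f)) x y).
  - apply (dword_ext U _ _ HU (fun x y Hu => IH (Ck_mono _ _ _ Hf) x y Hu) [false]); auto.
  - symmetry. apply (Schwarz_U U); auto. apply Ck_iter_py. rewrite Nat.add_comm; auto.
Qed.

Lemma dword_plus_U k U f g : open U -> Ck_on k U f -> Ck_on k U g ->
  forall w, (length w <= k)%nat -> forall x y, U (x, y) ->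
  dword w (fplus f g) x y = dword w f x y + dword w g x y.
Proof.
  intros HU Hf Hg w. induction w as [|b w IH]; intros Hl x y Hu; simpl; auto.
  simpl in Hl.
  destruct (Hf w x y ltac:(lia) Hu) as [_ Ef]. destruct (Ef ltac:(lia)) as [F1 F2].
  destruct (Hg w x y ltac:(lia) Hu) as [_ Eg]. destruct (Eg ltac:(lia)) as [G1 G2].
  destruct b; unfold px, py.
  - rewrite <- (Derive_plus (fun t => dword w f t y) (fun t => dword w g t y)); auto.
    apply Derive_ext_loc. generalize (loc_x U x y HU Hu). apply filter_imp.
    intros t Ht. apply IH; auto; lia.
  - rewrite <- (Derive_plus (fun t => dword w f x t) (fun t => dword w g x t)); auto.
    apply Derive_ext_loc. generalize (loc_y U x y HU Hu). apply filter_imp.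
    intros t Ht. apply IH; auto; lia.
Qed.

Lemma binom_sum N (T : nat -> R) :
  sum_f_R0 (fun i => Binomial.C N i * (T i + T (S i))) N =
  sum_f_R0 (fun i => Binomial.C (S N) i * T i) (S N).
Proof.
  destruct N as [|M].
  - simpl. rewrite !C_n_0. rewrite (C_n_n 1). ring.
  - rewrite (decomp_sum (fun i => Binomial.C (S (S M)) i * T i) (S (S M))) by lia.
    simpl Nat.pred. rewrite (tech5 (fun i => Binomial.C (S (S M)) (S i) * T (S i))).
    rewrite (sum_eq (fun i => Binomial.C (S (S M)) (S i) * T (S i))
                    (fun i => Binomial.C (S M) i * T (S i) + Binomial.C (S M) (S i) * T (S i))).
    2:{ intros i Hi. rewrite <- (pascal (S M) i) by lia. ring. }
    rewrite sum_plus.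
    rewrite (sum_eq _ (fun i => Binomial.C (S M) i * T i + Binomial.C (S M) i * T (S i))).
    2:{ intros; ring. }
    rewrite sum_plus.
    rewrite (decomp_sum (fun i => Binomial.C (S M) i * T i) (S M)) by lia.
    simpl Nat.pred. rewrite (tech5 (fun i => Binomial.C (S M) i * T (S i))).
    rewrite !C_n_0, !C_n_n. ring.
Qed.

Lemma iter_ext_U U f g m i : open U -> (forall x y, U (x, y) -> f x y = g x y) ->
  forall x y, U (x, y) -> Nat.iter m px (Nat.iter i py f) x y = Nat.iter m px (Nat.iter i py g) x y.
Proof.
  intros HU H x y Hu. rewrite !iter_px_dword, !iter_py_dword, <- !dword_cat.
  apply (dword_ext U f g HU H); auto.
Qed.

Lemma divn_step N U (B Cf : nat -> fn2) : open U ->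
  (forall i, (i <= S N)%nat -> Ck_on (S N) U (B i)) ->
  (forall i x y, (i <= N)%nat -> U (x, y) -> Cf i x y = px (B i) x y + py (B (S i)) x y) ->
  forall x y, U (x, y) -> divn (S N) B x y = divn N Cf x y.
Proof.
  intros HU HB HC x y Hu. unfold divn.
  set (T := fun j => Nat.iter (S N - j) px (Nat.iter j py (B j)) x y).
  transitivity (sum_f_R0 (fun i => Binomial.C N i * (T i + T (S i))) N).
  - rewrite binom_sum. apply sum_eq. intros; reflexivity.
  - apply sum_eq. intros i Hi. f_equal.
    rewrite (iter_ext_U U (Cf i) (fplus (px (B i)) (py (B (S i))))); auto.
    rewrite iter_px_dword, iter_py_dword, <- dword_cat.
    rewrite (dword_plus_U N U); auto.
    2: apply Ck_px, HB; lia.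
    2: apply Ck_py, HB; lia.
    2: rewrite length_app, !repeat_length; lia.
    rewrite dword_cat, <- iter_px_dword, <- iter_py_dword.
    rewrite dword_cat, <- iter_px_dword, <- iter_py_dword.
    unfold T. f_equal.
    + rewrite (Nat.sub_succ_l i N Hi). rewrite Nat.iter_succ_r.
      rewrite !iter_px_dword. apply (dword_ext U); auto.
      intros u v Huv. symmetry. apply (comm_py_px i U); auto.
      apply (Ck_mono_le (S N)); [lia|]. apply HB; lia.
    + simpl (S N - S i)%nat. rewrite <- Nat.iter_succ_r. reflexivity.
Qed.

Definition mono := (R * nat * nat)%type.
Definition mdeg (m : mono) : nat := (snd (fst m) + snd m)%nat.
Definition meval (m : mono) (x y : R) : R := fst (fst m) * x ^ (snd (fst m)) * y ^ (snd m).
Fixpoint peval (l : list mono) (x y : R) : R :=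
  match l with nil => 0 | m :: l' => meval m x y + peval l' x y end.

Definition Poly (k : nat) (f : fn2) : Prop :=
  exists l, List.Forall (fun m => (mdeg m <= k)%nat) l /\ forall x y, f x y = peval l x y.

Lemma peval_app l1 l2 x y : peval (l1 ++ l2) x y = peval l1 x y + peval l2 x y.
Proof. induction l1; simpl; [ring|]. rewrite IHl1; ring. Qed.

Definition mmul (m1 m2 : mono) : mono :=
  (fst (fst m1) * fst (fst m2), (snd (fst m1) + snd (fst m2))%nat, (snd m1 + snd m2)%nat).

Lemma meval_mul m1 m2 x y : meval (mmul m1 m2) x y = meval m1 x y * meval m2 x y.
Proof. destruct m1 as [[c1 i1] j1]; destruct m2 as [[c2 i2] j2]; unfold meval, mmul; simpl.
  rewrite !pow_add; ring. Qed.

Lemma peval_map_mul m l x y : peval (map (mmul m) l) x y = meval m x y * peval l x y.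
Proof. induction l; simpl; [ring|]. rewrite IHl, meval_mul; ring. Qed.

Definition pmul (l1 l2 : list mono) : list mono := flat_map (fun m => map (mmul m) l2) l1.
Lemma peval_mul l1 l2 x y : peval (pmul l1 l2) x y = peval l1 x y * peval l2 x y.
Proof. induction l1; simpl; [ring|]. unfold pmul in *; simpl. rewrite peval_app, IHl1, peval_map_mul; ring. Qed.

Lemma Poly_plus k f g : Poly k f -> Poly k g -> Poly k (fplus f g).
Proof.
  intros [l1 [H1 E1]] [l2 [H2 E2]]. exists (l1 ++ l2). split.
  apply Forall_app; auto. intros; unfold fplus; rewrite peval_app, E1, E2; auto.
Qed.

Lemma Poly_mul k1 k2 f g : Poly k1 f -> Poly k2 g -> Poly (k1 + k2) (fmul f g).
Proof.
  intros [l1 [H1 E1]] [l2 [H2 E2]]. exists (pmul l1 l2). split.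
  - unfold pmul. apply Forall_flat_map. rewrite Forall_forall in *. intros m1 Hm1.
    apply Forall_map. rewrite Forall_forall. intros m2 Hm2.
    specialize (H1 m1 Hm1). specialize (H2 m2 Hm2). unfold mdeg, mmul in *; simpl. lia.
  - intros; unfold fmul; rewrite peval_mul, E1, E2; auto.
Qed.

Lemma Poly_mono k k' f : (k <= k')%nat -> Poly k f -> Poly k' f.
Proof.
  intros Hk [l [H E]]. exists l; split; auto. rewrite Forall_forall in *. intros m Hm. specialize (H m Hm); lia.
Qed.

Lemma Poly_ext k f g : (forall x y, f x y = g x y) -> Poly k f -> Poly k g.
Proof. intros Hfg [l [H E]]. exists l; split; auto. intros; rewrite <- Hfg; auto. Qed.

Lemma Poly_mon c i j : Poly (i + j) (fun x y => c * x ^ i * y ^ j).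
Proof. exists [(c, i, j)]. split. constructor; [|constructor]. unfold mdeg; simpl. lia.
  intros; simpl. unfold meval; simpl; ring. Qed.

Lemma Poly_const k c : Poly k (fun _ _ => c).
Proof. apply (Poly_mono 0); [lia|]. apply (Poly_ext 0 (fun x y => c * x ^ 0 * y ^ 0)).
  intros; simpl; ring. exact (Poly_mon c 0 0). Qed.

Lemma Poly_sum k N (f : nat -> fn2) : (forall j, (j <= N)%nat -> Poly k (f j)) ->
  Poly k (fun x y => sum_f_R0 (fun j => f j x y) N).
Proof.
  induction N as [|N IH]; intros H; simpl.
  - apply H; lia.
  - apply (Poly_plus k (fun x y => sum_f_R0 (fun j => f j x y) N) (f (S N))); auto.
Qed.

Lemma is_poly_Poly k f : is_poly_le k f -> Poly k f.
Proof.
  intros [coef E]. apply (Poly_ext k (fun x y => sum_f_R0 (fun i => sum_f_R0 (fun j => coef i j * x ^ i * y ^ j) (k - i)) k)).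
  intros; rewrite E; auto.
  apply Poly_sum. intros i Hi. apply Poly_sum. intros j Hj.
  apply (Poly_mono (i + j)); [lia|]. apply Poly_mon.
Qed.

Definition dlt (a b : nat) : R := if Nat.eqb a b then 1 else 0.

Lemma sum_delta M (k : nat) (w : nat -> R) :
  sum_f_R0 (fun l => dlt k l * w l) M = if Nat.leb k M then w k else 0.
Proof.
  induction M as [|M IH]; simpl.
  - unfold dlt. destruct k; simpl; ring.
  - rewrite IH. unfold dlt. destruct (Nat.leb k M) eqn:E1.
    + apply Nat.leb_le in E1. destruct (Nat.eqb k (S M)) eqn:E2.
      apply Nat.eqb_eq in E2; lia. assert (Nat.leb k (S M) = true) by (apply Nat.leb_le; lia).
      rewrite H; ring.
    + apply Nat.leb_gt in E1. destruct (Nat.eqb k (S M)) eqn:E2.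
      apply Nat.eqb_eq in E2; subst. rewrite Nat.leb_refl; ring.
      apply Nat.eqb_neq in E2. assert (Nat.leb k (S M) = false) by (apply Nat.leb_gt; lia).
      rewrite H; ring.
Qed.

Lemma sum_zero N : sum_f_R0 (fun _ => 0) N = 0.
Proof. induction N; simpl; auto. rewrite IHN; ring. Qed.

Lemma Poly_is_poly k f : Poly k f -> is_poly_le k f.
Proof.
  intros [l [H E]].
  assert (Hc : exists coef : nat -> nat -> R, forall x y,
    peval l x y = sum_f_R0 (fun i => sum_f_R0 (fun j => coef i j * x ^ i * y ^ j) (k - i)) k).
  { clear E. induction l as [|m l IH].
    - exists (fun _ _ => 0). intros; simpl. symmetry.
      rewrite (sum_eq _ (fun _ => 0)). apply sum_zero.
      intros i _. rewrite (sum_eq _ (fun _ => 0)). apply sum_zero. intros; ring.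
    - inversion H as [|? ? Hm Hl]; subst. destruct (IH Hl) as [coef Ec].
      destruct m as [[c i0] j0]. unfold mdeg in Hm; simpl in Hm.
      exists (fun i j => coef i j + c * dlt i0 i * dlt j0 j).
      intros x y. simpl. rewrite Ec.
      rewrite (sum_eq (fun i => sum_f_R0 (fun j => (coef i j + c * dlt i0 i * dlt j0 j) * x ^ i * y ^ j) (k - i)) (fun i => sum_f_R0 (fun j => coef i j * x ^ i * y ^ j) (k - i) +
                                  dlt i0 i * (c * x ^ i * sum_f_R0 (fun j => dlt j0 j * y ^ j) (k - i)))).
      2:{ intros i Hi. rewrite (scal_sum _ _ (c * x ^ i)), scal_sum, <- sum_plus. apply sum_eq. intros. ring. }
      rewrite sum_plus. rewrite sum_delta.
      assert (Nat.leb i0 k = true) by (apply Nat.leb_le; lia). rewrite H0.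
      rewrite sum_delta. assert (Nat.leb j0 (k - i0) = true) by (apply Nat.leb_le; lia). rewrite H1.
      unfold meval; simpl; ring. }
  destruct Hc as [coef Hc]. exists coef. intros; rewrite E; auto.
Qed.

Definition mdx (m : mono) : list mono :=
  match snd (fst m) with O => nil | S i => [(fst (fst m) * INR (S i), i, snd m)] end.
Definition mdy (m : mono) : list mono :=
  match snd m with O => nil | S j => [(fst (fst m) * INR (S j), snd (fst m), j)] end.
Definition pdx l := flat_map mdx l.
Definition pdy l := flat_map mdy l.

Lemma is_derive_peval_x l x y : is_derive (fun t => peval l t y) x (peval (pdx l) x y).
Proof.
  induction l as [|m l IH]; simpl.
  - apply (is_derive_const 0 x).
  - unfold pdx in *; simpl. rewrite peval_app.
    apply (is_derive_plus (fun t => meval m t y) (fun t => peval l t y)); auto.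
    destruct m as [[c i] j]. unfold meval, mdx; simpl.
    auto_derive; auto.
    destruct i; simpl; [ring|]. unfold meval; simpl. ring.
Qed.

Lemma is_derive_peval_y l x y : is_derive (fun t => peval l x t) y (peval (pdy l) x y).
Proof.
  induction l as [|m l IH]; simpl.
  - apply (is_derive_const 0 y).
  - unfold pdy in *; simpl. rewrite peval_app.
    apply (is_derive_plus (fun t => meval m x t) (fun t => peval l x t)); auto.
    destruct m as [[c i] j]. unfold meval, mdy; simpl.
    auto_derive; auto.
    destruct j; simpl; [ring|]. unfold meval; simpl. ring.
Qed.

Lemma pdx_deg k l : List.Forall (fun m => (mdeg m <= S k)%nat) l -> List.Forall (fun m => (mdeg m <= k)%nat) (pdx l).
Proof.
  intros H. unfold pdx. apply Forall_flat_map. rewrite Forall_forall in *. intros [[c i] j] Hm.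
  specialize (H _ Hm). unfold mdeg in H; simpl in H. unfold mdx; simpl. destruct i; constructor; auto.
  unfold mdeg; simpl; lia.
Qed.
Lemma pdy_deg k l : List.Forall (fun m => (mdeg m <= S k)%nat) l -> List.Forall (fun m => (mdeg m <= k)%nat) (pdy l).
Proof.
  intros H. unfold pdy. apply Forall_flat_map. rewrite Forall_forall in *. intros [[c i] j] Hm.
  specialize (H _ Hm). unfold mdeg in H; simpl in H. unfold mdy; simpl. destruct j; constructor; auto.
  unfold mdeg; simpl; lia.
Qed.
Lemma pdx_0 l : List.Forall (fun m => (mdeg m <= 0)%nat) l -> pdx l = nil.
Proof.
  induction l as [|[[c i] j] l IH]; intros H; simpl; auto. inversion H; subst.
  unfold mdeg in H2; simpl in H2. assert (i = 0%nat) by lia; subst. unfold pdx in *. simpl. apply IH; auto.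
Qed.
Lemma pdy_0 l : List.Forall (fun m => (mdeg m <= 0)%nat) l -> pdy l = nil.
Proof.
  induction l as [|[[c i] j] l IH]; intros H; simpl; auto. inversion H; subst.
  unfold mdeg in H2; simpl in H2. assert (j = 0%nat) by lia; subst. unfold pdy in *. simpl. apply IH; auto.
Qed.

Lemma px_peval f l x y : (forall x y, f x y = peval l x y) -> px f x y = peval (pdx l) x y.
Proof.
  intros E. unfold px. rewrite (Derive_ext _ (fun t => peval l t y)) by auto.
  apply is_derive_unique. apply is_derive_peval_x.
Qed.
Lemma py_peval f l x y : (forall x y, f x y = peval l x y) -> py f x y = peval (pdy l) x y.
Proof.
  intros E. unfold py. rewrite (Derive_ext _ (fun t => peval l x t)) by auto.
  apply is_derive_unique. apply is_derive_peval_y.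
Qed.

Lemma Poly_px k f : Poly (S k) f -> Poly k (px f).
Proof. intros [l [H E]]. exists (pdx l). split. apply pdx_deg; auto. intros; apply px_peval; auto. Qed.
Lemma Poly_py k f : Poly (S k) f -> Poly k (py f).
Proof. intros [l [H E]]. exists (pdy l). split. apply pdy_deg; auto. intros; apply py_peval; auto. Qed.
Lemma Poly0_px f x y : Poly 0 f -> px f x y = 0.
Proof. intros [l [H E]]. rewrite (px_peval f l); auto. rewrite pdx_0; auto. Qed.
Lemma Poly0_py f x y : Poly 0 f -> py f x y = 0.
Proof. intros [l [H E]]. rewrite (py_peval f l); auto. rewrite pdy_0; auto. Qed.

Definition IsPoly (f : fn2) := exists k, Poly k f.

Lemma IsPoly_plus f g : IsPoly f -> IsPoly g -> IsPoly (fplus f g).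
Proof. intros [k1 H1] [k2 H2]. exists (k1 + k2)%nat. apply Poly_plus; [apply (Poly_mono k1)|apply (Poly_mono k2)]; auto; lia. Qed.
Lemma IsPoly_mul f g : IsPoly f -> IsPoly g -> IsPoly (fmul f g).
Proof. intros [k1 H1] [k2 H2]. exists (k1 + k2)%nat. apply Poly_mul; auto. Qed.
Lemma IsPoly_const c : IsPoly (fun _ _ => c).
Proof. exists 0%nat. apply Poly_const. Qed.
Lemma IsPoly_ext f g : (forall x y, f x y = g x y) -> IsPoly f -> IsPoly g.
Proof. intros E [k H]. exists k. eapply Poly_ext; eauto. Qed.
Lemma IsPoly_sum N (f : nat -> fn2) : (forall j, (j <= N)%nat -> IsPoly (f j)) ->
  IsPoly (fun x y => sum_f_R0 (fun j => f j x y) N).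
Proof.
  induction N as [|N IH]; intros H; simpl.
  - apply H; lia.
  - apply (IsPoly_plus (fun x y => sum_f_R0 (fun j => f j x y) N) (f (S N))); auto.
Qed.

Lemma IsPoly_exdx f x y : IsPoly f -> ex_derive (fun t => f t y) x.
Proof.
  intros [k [l [H E]]]. apply (ex_derive_ext (fun t => peval l t y)). intros; auto.
  eexists. apply is_derive_peval_x.
Qed.
Lemma IsPoly_exdy f x y : IsPoly f -> ex_derive (fun t => f x t) y.
Proof.
  intros [k [l [H E]]]. apply (ex_derive_ext (fun t => peval l x t)). intros; auto.
  eexists. apply is_derive_peval_y.
Qed.

Lemma Ck_pow k U i : open U -> Ck_on k U (fun x _ => x ^ i).
Proof.
  intros HU. induction i as [|i IH]; simpl. apply Ck_const.
  apply (Ck_mul k U (fun x _ => x) (fun x _ => x ^ i)); auto. apply Ck_X.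
Qed.
Lemma Ck_powy k U i : open U -> Ck_on k U (fun _ y => y ^ i).
Proof.
  intros HU. induction i as [|i IH]; simpl. apply Ck_const.
  apply (Ck_mul k U (fun _ y => y) (fun _ y => y ^ i)); auto. apply Ck_Y.
Qed.
Lemma Ck_peval k U l : open U -> Ck_on k U (peval l).
Proof.
  intros HU. induction l as [|[[c i] j] l IH]; simpl.
  - apply Ck_const.
  - apply (Ck_plus k U (fun x y => c * x ^ i * y ^ j) (peval l)); auto.
    apply (Ck_mul k U (fun x y => c * x ^ i) (fun x y => y ^ j)); auto.
    apply (Ck_mul k U (fun x y => c) (fun x y => x ^ i)); auto. apply Ck_const. apply Ck_pow; auto.
    apply Ck_powy; auto.
Qed.
Lemma Ck_IsPoly k U f : open U -> IsPoly f -> Ck_on k U f.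
Proof.
  intros HU [k0 [l [H E]]]. apply (Ck_ext k U (peval l)).
  - exact HU.
  - intros x y _. rewrite E; reflexivity.
  - apply Ck_peval; auto.
Qed.

Lemma sum_scal_l c (F : nat -> R) N : sum_f_R0 (fun i => c * F i) N = c * sum_f_R0 F N.
Proof. induction N; simpl; auto. rewrite IHN; ring. Qed.

Lemma sum_swap N M (f : nat -> nat -> R) :
  sum_f_R0 (fun i => sum_f_R0 (fun j => f i j) M) N = sum_f_R0 (fun j => sum_f_R0 (fun i => f i j) N) M.
Proof.
  induction N as [|N IH]; simpl; auto.
  rewrite IH. rewrite <- sum_plus. reflexivity.
Qed.

Lemma poly_zero M (w : nat -> R) : (forall s, sum_f_R0 (fun l => w l * s ^ l) M = 0) ->
  forall l, (l <= M)%nat -> w l = 0.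
Proof.
  revert w. induction M as [|M IH]; intros w H l Hl.
  - assert (l = 0%nat) by lia; subst. specialize (H 0). simpl in H. lra.
  - assert (H0 : w 0%nat = 0).
    { specialize (H 0). rewrite decomp_sum in H by lia. simpl Nat.pred in H.
      rewrite (sum_eq _ (fun _ => 0)) in H. rewrite sum_zero in H. simpl in H. lra.
      intros i _. simpl. ring. }
    assert (Hd : forall s, sum_f_R0 (fun k => INR (S k) * w (S k) * s ^ k) M = 0).
    { intros s.
      assert (D : derivable_pt_lim (fun y => sum_f_R0 (fun k => w k * y ^ k) (S M)) s
                   (sum_f_R0 (fun k => INR (S k) * w (S k) * s ^ k) M)).
      { exact (derivable_pt_lim_finite_sum w s (S M)). }
      apply is_derive_Reals in D.
      apply is_derive_unique in D. rewrite <- D.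
      rewrite (Derive_ext _ (fun _ => 0)). apply Derive_const. intros; apply H. }
    destruct l as [|l]; auto.
    specialize (IH (fun k => INR (S k) * w (S k)) Hd l ltac:(lia)). simpl in IH.
    apply Rmult_integral in IH. destruct IH as [IH|IH]; auto.
    exfalso. apply (not_0_INR (S l)); auto.
Qed.

Lemma form_unique M (u v : nat -> R) :
  (forall t1 t2, sum_f_R0 (fun l => u l * t1 ^ (M - l) * t2 ^ l) M = sum_f_R0 (fun l => v l * t1 ^ (M - l) * t2 ^ l) M) ->
  forall l, (l <= M)%nat -> u l = v l.
Proof.
  intros H l Hl. apply Rminus_diag_uniq.
  apply (poly_zero M (fun l => u l - v l)); auto.
  intros s. specialize (H 1 s).
  rewrite (sum_eq _ (fun l => u l * 1 ^ (M - l) * s ^ l - v l * 1 ^ (M - l) * s ^ l)).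
  rewrite minus_sum. lra.
  intros; rewrite pow1; ring.
Qed.

Definition mon (M : nat) (t1 t2 : R) (l : nat) : R := t1 ^ (M - l) * t2 ^ l.

Definition lin3 N (p al be ga : nat -> R) (w : nat -> R) : R :=
  sum_f_R0 (fun j => p j * (al j * w j + be j * w (S j) + ga j * w (Nat.pred j))) N.

Definition coefL N (p al be ga : nat -> R) (l : nat) : R :=
  sum_f_R0 (fun j => p j * (al j * dlt j l + be j * dlt (S j) l + ga j * dlt (Nat.pred j) l)) N.

Lemma lin3_coef N M p al be ga w : (N <= M)%nat ->
  (forall j, (j <= N)%nat -> (M < S j)%nat -> be j = 0) ->
  lin3 N p al be ga w = sum_f_R0 (fun l => coefL N p al be ga l * w l) M.
Proof.
  intros HNM Hbe. unfold lin3, coefL.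
  rewrite (sum_eq (fun l => sum_f_R0 _ N * w l)
     (fun l => sum_f_R0 (fun j => p j * al j * (dlt j l * w l) + p j * be j * (dlt (S j) l * w l)
                 + p j * ga j * (dlt (Nat.pred j) l * w l)) N)).
  2:{ intros l _. rewrite Rmult_comm, scal_sum. apply sum_eq; intros; ring. }
  rewrite <- sum_swap. apply sum_eq. intros j Hj.
  rewrite !sum_plus, !sum_scal_l, !sum_delta.
  assert (E1 : Nat.leb j M = true) by (apply Nat.leb_le; lia).
  assert (E2 : Nat.leb (Nat.pred j) M = true) by (apply Nat.leb_le; lia).
  rewrite E1, E2. destruct (Nat.leb (S j) M) eqn:E3.
  - ring.
  - apply Nat.leb_gt in E3. rewrite (Hbe j Hj E3). ring.
Qed.

Lemma transfer N M (q p al be ga : nat -> R) : (N <= M)%nat ->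
  (forall j, (j <= N)%nat -> (M < S j)%nat -> be j = 0) ->
  (forall t1 t2, sum_f_R0 (fun l => q l * t1 ^ (M - l) * t2 ^ l) M = lin3 N p al be ga (mon M t1 t2)) ->
  forall w, sum_f_R0 (fun l => q l * w l) M = lin3 N p al be ga w.
Proof.
  intros HNM Hbe H w. rewrite (lin3_coef N M); auto.
  apply sum_eq. intros l Hl. f_equal.
  apply (form_unique M q (coefL N p al be ga)); auto.
  intros t1 t2. rewrite H. rewrite (lin3_coef N M); auto.
  apply sum_eq; intros; unfold mon; ring.
Qed.

Lemma mul_form N (p : nat -> R) al be t1 t2 :
  (al * t1 + be * t2) * sum_f_R0 (fun j => p j * t1 ^ (N - j) * t2 ^ j) N =
  lin3 N p (fun _ => al) (fun _ => be) (fun _ => 0) (mon (S N) t1 t2).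
Proof.
  unfold lin3, mon. rewrite scal_sum. apply sum_eq. intros j Hj.
  rewrite (Nat.sub_succ_l j N Hj). simpl (S N - S j)%nat. simpl. ring.
Qed.

Fixpoint Kr (a b c : fn2) (N : nat) : nat -> nat -> fn2 :=
  match N with
  | O => fun i l => fun _ _ => 1
  | S N' => fun i l => fun x y =>
      if Nat.leb i N'
      then coefL N' (fun j => Kr a b c N' i j x y) (fun _ => a x y) (fun _ => b x y) (fun _ => 0) l
      else coefL N' (fun j => Kr a b c N' N' j x y) (fun _ => b x y) (fun _ => c x y) (fun _ => 0) l
  end.

Lemma Kr_spec a b c N : kron2_spec a b c N (Kr a b c N).
Proof.
  induction N as [|N IH]; intros i x y t1 t2 Hi.
  - assert (i = 0%nat) by lia; subst. simpl. ring.
  - destruct (Nat.leb i N) eqn:E.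
    + assert (E' := proj1 (Nat.leb_le _ _) E).
      rewrite (Nat.sub_succ_l i N E'). simpl pow at 1.
      rewrite Rmult_assoc, (IH i x y t1 t2 E'), mul_form.
      rewrite (lin3_coef N (S N)); [|lia|intros; lia].
      apply sum_eq. intros l Hl. cbn [Kr]. rewrite E. unfold mon. ring.
    + apply Nat.leb_gt in E. assert (i = S N) by lia; subst.
      rewrite Nat.sub_diag. simpl pow at 2.
      replace ((a x y * t1 + b x y * t2) ^ 0 * ((b x y * t1 + c x y * t2) * (b x y * t1 + c x y * t2) ^ N))
        with ((b x y * t1 + c x y * t2) * ((a x y * t1 + b x y * t2) ^ (N - N) * (b x y * t1 + c x y * t2) ^ N))
        by (rewrite Nat.sub_diag; simpl; ring).
      rewrite (IH N x y t1 t2 (le_n N)), mul_form.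
      rewrite (lin3_coef N (S N)); [|lia|intros; lia].
      apply sum_eq. intros l Hl. cbn [Kr]. rewrite (proj2 (Nat.leb_gt (S N) N)) by lia. unfold mon; ring.
Qed.

Lemma Kr_poly a b c N : IsPoly a -> IsPoly b -> IsPoly c -> forall i l, IsPoly (Kr a b c N i l).
Proof.
  intros Ha Hb Hc. induction N as [|N IH]; intros i l; simpl.
  - apply IsPoly_const.
  - destruct (Nat.leb i N); unfold coefL.
    + apply (IsPoly_sum N (fun j => fun x y => Kr a b c N i j x y * (a x y * dlt j l + b x y * dlt (S j) l + 0 * dlt (Nat.pred j) l))).
      intros j _. apply (IsPoly_mul (Kr a b c N i j)); auto.
      apply (IsPoly_plus (fplus (fmul a (fun _ _ => dlt j l)) (fmul b (fun _ _ => dlt (S j) l)))).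
      apply IsPoly_plus; apply IsPoly_mul; auto; apply IsPoly_const.
      apply IsPoly_mul; apply IsPoly_const.
    + apply (IsPoly_sum N (fun j => fun x y => Kr a b c N N j x y * (b x y * dlt j l + c x y * dlt (S j) l + 0 * dlt (Nat.pred j) l))).
      intros j _. apply (IsPoly_mul (Kr a b c N N j)); auto.
      apply (IsPoly_plus (fplus (fmul b (fun _ _ => dlt j l)) (fmul c (fun _ _ => dlt (S j) l)))).
      apply IsPoly_plus; apply IsPoly_mul; auto; apply IsPoly_const.
      apply IsPoly_mul; apply IsPoly_const.
Qed.

Lemma kron_eq a b c N phi : kron2_spec a b c N phi ->
  forall i l x y, (i <= N)%nat -> (l <= N)%nat -> phi i l x y = Kr a b c N i l x y.
Proof.
  intros H i l x y Hi Hl.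
  apply (form_unique N (fun l => phi i l x y) (fun l => Kr a b c N i l x y)); auto.
  intros t1 t2. rewrite <- H, <- Kr_spec; auto.
Qed.

Lemma is_derive_sum (f : nat -> R -> R) (df : nat -> R) N x :
  (forall j, (j <= N)%nat -> is_derive (f j) x (df j)) ->
  is_derive (fun s => sum_f_R0 (fun j => f j s) N) x (sum_f_R0 df N).
Proof.
  induction N as [|N IH]; intros H; simpl.
  - apply H; lia.
  - apply (is_derive_plus (fun s => sum_f_R0 (fun j => f j s) N) (f (S N))); auto.
Qed.

Lemma derZ (a b c : fn2) x y t1 t2 k i :
  ex_derive (fun t => a t y) x -> ex_derive (fun t => b t y) x -> ex_derive (fun t => c t y) x ->
  is_derive (fun s => (a s y * t1 + b s y * t2) ^ k * (b s y * t1 + c s y * t2) ^ i) x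
   (INR k * (px a x y * t1 + px b x y * t2) * (a x y * t1 + b x y * t2) ^ Nat.pred k * (b x y * t1 + c x y * t2) ^ i
    + (a x y * t1 + b x y * t2) ^ k * (INR i * (px b x y * t1 + px c x y * t2) * (b x y * t1 + c x y * t2) ^ Nat.pred i)).
Proof.
  intros Ha Hb Hc. auto_derive. repeat split; auto.
  unfold px. ring.
Qed.

Lemma derZy (a b c : fn2) x y t1 t2 k i :
  ex_derive (fun t => a x t) y -> ex_derive (fun t => b x t) y -> ex_derive (fun t => c x t) y ->
  is_derive (fun s => (a x s * t1 + b x s * t2) ^ k * (b x s * t1 + c x s * t2) ^ i) y
   (INR k * (py a x y * t1 + py b x y * t2) * (a x y * t1 + b x y * t2) ^ Nat.pred k * (b x y * t1 + c x y * t2) ^ i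
    + (a x y * t1 + b x y * t2) ^ k * (INR i * (py b x y * t1 + py c x y * t2) * (b x y * t1 + c x y * t2) ^ Nat.pred i)).
Proof.
  intros Ha Hb Hc. auto_derive. repeat split; auto.
  unfold py. ring.
Qed.

Lemma derE (p : nat -> R) N t1 t2 v1 v2 :
  is_derive (fun e => sum_f_R0 (fun j => p j * (t1 + e * v1) ^ (N - j) * (t2 + e * v2) ^ j) N) 0
    (sum_f_R0 (fun j => p j * (INR (N - j) * v1 * t1 ^ Nat.pred (N - j) * t2 ^ j
                                + t1 ^ (N - j) * (INR j * v2 * t2 ^ Nat.pred j))) N).
Proof.
  apply (is_derive_sum (fun j e => p j * (t1 + e * v1) ^ (N - j) * (t2 + e * v2) ^ j)).
  intros j _. auto_derive; auto. rewrite !Rmult_0_l, !Rplus_0_r. ring.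
Qed.

Lemma derZe a0 b0 c0 t1 t2 v1 v2 k i :
  is_derive (fun e => (a0 * (t1 + e * v1) + b0 * (t2 + e * v2)) ^ k * (b0 * (t1 + e * v1) + c0 * (t2 + e * v2)) ^ i) 0
   (INR k * (a0 * v1 + b0 * v2) * (a0 * t1 + b0 * t2) ^ Nat.pred k * (b0 * t1 + c0 * t2) ^ i
    + (a0 * t1 + b0 * t2) ^ k * (INR i * (b0 * v1 + c0 * v2) * (b0 * t1 + c0 * t2) ^ Nat.pred i)).
Proof.
  auto_derive; auto. rewrite !Rmult_0_l, !Rplus_0_r. ring.
Qed.

Lemma mon_deriv N j t1 t2 n00 n01 n10 n11 : (j <= N)%nat ->
  INR (N - j) * (n00 * t1 + n01 * t2) * t1 ^ Nat.pred (N - j) * t2 ^ j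
  + t1 ^ (N - j) * (INR j * (n10 * t1 + n11 * t2) * t2 ^ Nat.pred j) =
  (INR (N - j) * n00 + INR j * n11) * mon N t1 t2 j + INR (N - j) * n01 * mon N t1 t2 (S j)
  + INR j * n10 * mon N t1 t2 (Nat.pred j).
Proof.
  intros Hj. unfold mon. destruct j as [|j].
  - simpl Nat.pred. rewrite Nat.sub_0_r. replace (N - 1)%nat with (Nat.pred N) by lia. simpl INR.
    destruct N as [|N]; simpl Nat.pred; simpl; ring.
  - replace (N - S (S j))%nat with (Nat.pred (N - S j)) by lia.
    simpl Nat.pred. replace (N - j)%nat with (S (N - S j)) by lia.
    destruct (N - S j)%nat as [|u]; simpl Nat.pred; simpl pow; rewrite ?INR_0; ring.
Qed.

Definition ALc N (n00 n11 : R) (j : nat) : R := INR (N - j) * n00 + INR j * n11.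
Definition BEc N (n01 : R) (j : nat) : R := INR (N - j) * n01.
Definition GAc (n10 : R) (j : nat) : R := INR j * n10.

Lemma D_kron (a b c al be : fn2) (Psi : nat -> nat -> fn2) N P x y i :
  IsPoly a -> IsPoly b -> IsPoly c -> IsPoly al -> IsPoly be ->
  (forall (r s : nat) (x y : R), (r <= 1)%nat -> (s <= 1)%nat ->
     px (fmul al (Phi2 a b c r s)) x y + py (fmul be (Phi2 a b c r s)) x y =
     sum_f_R0 (fun t => Phi2 a b c r t x y * Psi t s x y) 1) ->
  kron2_spec a b c N P -> (i <= N)%nat ->
  forall w, sum_f_R0 (fun l => (al x y * px (P i l) x y + be x y * py (P i l) x y) * w l) N =
    lin3 N (fun j => P i j x y)
      (ALc N (Psi 0%nat 0%nat x y - (px al x y + py be x y)) (Psi 1%nat 1%nat x y - (px al x y + py be x y)))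
      (BEc N (Psi 0%nat 1%nat x y)) (GAc (Psi 1%nat 0%nat x y)) w.
Proof.
  intros Ha Hb Hc Hal Hbe H HP Hi.
  set (sD := px al x y + py be x y).
  set (n00 := Psi 0%nat 0%nat x y - sD). set (n11 := Psi 1%nat 1%nat x y - sD).
  set (n01 := Psi 0%nat 1%nat x y). set (n10 := Psi 1%nat 0%nat x y).
  assert (HPp : forall l, (l <= N)%nat -> IsPoly (P i l)).
  { intros l Hl. apply (IsPoly_ext (Kr a b c N i l)). intros; symmetry; apply kron_eq; auto.
    apply Kr_poly; auto. }
  apply transfer; [lia| |].
  { intros j Hj Hlt. assert (j = N) by lia; subst. unfold BEc. rewrite Nat.sub_diag. simpl; ring. }
  intros t1 t2.
  set (a0 := a x y). set (b0 := b x y). set (c0 := c x y).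
  set (z1 := a0 * t1 + b0 * t2). set (z2 := b0 * t1 + c0 * t2).
  assert (HX : sum_f_R0 (fun l => px (P i l) x y * t1 ^ (N - l) * t2 ^ l) N =
     INR (N - i) * (px a x y * t1 + px b x y * t2) * z1 ^ Nat.pred (N - i) * z2 ^ i
    + z1 ^ (N - i) * (INR i * (px b x y * t1 + px c x y * t2) * z2 ^ Nat.pred i)).
  { assert (D1 : is_derive (fun s => sum_f_R0 (fun l => P i l s y * t1 ^ (N - l) * t2 ^ l) N) x
                   (sum_f_R0 (fun l => px (P i l) x y * t1 ^ (N - l) * t2 ^ l) N)).
    { apply (is_derive_sum (fun l s => P i l s y * t1 ^ (N - l) * t2 ^ l)).
      intros l Hl. auto_derive. apply IsPoly_exdx; auto. unfold px; ring. }
    assert (D2 := derZ a b c x y t1 t2 (N - i) i (IsPoly_exdx _ _ _ Ha) (IsPoly_exdx _ _ _ Hb) (IsPoly_exdx _ _ _ Hc)).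
    apply is_derive_unique in D1. apply is_derive_unique in D2.
    unfold z1, z2, a0, b0, c0. rewrite <- D1, <- D2. apply Derive_ext. intros s. symmetry. apply HP; auto. }
  assert (HY : sum_f_R0 (fun l => py (P i l) x y * t1 ^ (N - l) * t2 ^ l) N =
     INR (N - i) * (py a x y * t1 + py b x y * t2) * z1 ^ Nat.pred (N - i) * z2 ^ i
    + z1 ^ (N - i) * (INR i * (py b x y * t1 + py c x y * t2) * z2 ^ Nat.pred i)).
  { assert (D1 : is_derive (fun s => sum_f_R0 (fun l => P i l x s * t1 ^ (N - l) * t2 ^ l) N) y
                   (sum_f_R0 (fun l => py (P i l) x y * t1 ^ (N - l) * t2 ^ l) N)).
    { apply (is_derive_sum (fun l s => P i l x s * t1 ^ (N - l) * t2 ^ l)).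
      intros l Hl. auto_derive. apply IsPoly_exdy; auto. unfold py; ring. }
    assert (D2 := derZy a b c x y t1 t2 (N - i) i (IsPoly_exdy _ _ _ Ha) (IsPoly_exdy _ _ _ Hb) (IsPoly_exdy _ _ _ Hc)).
    apply is_derive_unique in D1. apply is_derive_unique in D2.
    unfold z1, z2, a0, b0, c0. rewrite <- D1, <- D2. apply Derive_ext. intros s. symmetry. apply HP; auto. }
  assert (Eal := IsPoly_exdx _ x y Hal). assert (Ebe := IsPoly_exdy _ x y Hbe).
  assert (Eax := IsPoly_exdx _ x y Ha). assert (Ebx := IsPoly_exdx _ x y Hb). assert (Ecx := IsPoly_exdx _ x y Hc).
  assert (Eay := IsPoly_exdy _ x y Ha). assert (Eby := IsPoly_exdy _ x y Hb). assert (Ecy := IsPoly_exdy _ x y Hc).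
  assert (H00 := H 0%nat 0%nat x y ltac:(lia) ltac:(lia)).
  assert (H01 := H 0%nat 1%nat x y ltac:(lia) ltac:(lia)).
  assert (H10 := H 1%nat 0%nat x y ltac:(lia) ltac:(lia)).
  assert (H11 := H 1%nat 1%nat x y ltac:(lia) ltac:(lia)).
  cbn [Phi2 sum_f_R0] in H00, H01, H10, H11.
  rewrite px_mul, py_mul in H00, H01, H10, H11 by auto.
  assert (Da : al x y * px a x y + be x y * py a x y = a0 * n00 + b0 * n10).
  { unfold n00, n10, sD, a0, b0. lra. }
  assert (Db1 : al x y * px b x y + be x y * py b x y = a0 * n01 + b0 * n11).
  { unfold n01, n11, sD, a0, b0. lra. }
  assert (Db2 : al x y * px b x y + be x y * py b x y = b0 * n00 + c0 * n10).
  { unfold n00, n10, sD, c0, b0. lra. }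
  assert (Dc : al x y * px c x y + be x y * py c x y = b0 * n01 + c0 * n11).
  { unfold n01, n11, sD, c0, b0. lra. }
  set (v1 := n00 * t1 + n01 * t2). set (v2 := n10 * t1 + n11 * t2).
  assert (HE : sum_f_R0 (fun j => P i j x y * (INR (N - j) * v1 * t1 ^ Nat.pred (N - j) * t2 ^ j
                                + t1 ^ (N - j) * (INR j * v2 * t2 ^ Nat.pred j))) N =
     INR (N - i) * (a0 * v1 + b0 * v2) * z1 ^ Nat.pred (N - i) * z2 ^ i
    + z1 ^ (N - i) * (INR i * (b0 * v1 + c0 * v2) * z2 ^ Nat.pred i)).
  { assert (D1 := derE (fun j => P i j x y) N t1 t2 v1 v2).
    assert (D2 := derZe a0 b0 c0 t1 t2 v1 v2 (N - i) i).
    apply is_derive_unique in D1. apply is_derive_unique in D2.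
    rewrite <- D1. unfold z1, z2. rewrite <- D2. apply Derive_ext. intros e.
    symmetry. apply HP; auto. }
  assert (R1 : a0 * v1 + b0 * v2 = (al x y * px a x y + be x y * py a x y) * t1 + (al x y * px b x y + be x y * py b x y) * t2).
  { rewrite Da, Db1. unfold v1, v2. ring. }
  assert (R2 : b0 * v1 + c0 * v2 = (al x y * px b x y + be x y * py b x y) * t1 + (al x y * px c x y + be x y * py c x y) * t2).
  { rewrite Db2, Dc. unfold v1, v2. ring. }
  rewrite R1, R2 in HE.
  transitivity (al x y * sum_f_R0 (fun l => px (P i l) x y * t1 ^ (N - l) * t2 ^ l) N
              + be x y * sum_f_R0 (fun l => py (P i l) x y * t1 ^ (N - l) * t2 ^ l) N).
  { rewrite <- !sum_scal_l, <- sum_plus. apply sum_eq; intros; ring. }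
  rewrite HX, HY.
  unfold lin3. transitivity (sum_f_R0 (fun j => P i j x y * (INR (N - j) * v1 * t1 ^ Nat.pred (N - j) * t2 ^ j
                                + t1 ^ (N - j) * (INR j * v2 * t2 ^ Nat.pred j))) N).
  { rewrite HE. ring. }
  apply sum_eq. intros j Hj. unfold v1, v2. rewrite mon_deriv by auto.
  unfold ALc, BEc, GAc. ring.
Qed.

Definition fX : fn2 := fun x _ => x.
Definition fY : fn2 := fun _ y => y.

Lemma exX x y : ex_derive (fun t => fX t y) x /\ ex_derive (fun t => fX x t) y.
Proof. unfold fX. split. apply ex_derive_id. apply ex_derive_const. Qed.
Lemma exY x y : ex_derive (fun t => fY t y) x /\ ex_derive (fun t => fY x t) y.
Proof. unfold fY. split. apply ex_derive_const. apply ex_derive_id. Qed.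
Lemma exC (k : R) x y : ex_derive (fun t => (fun _ _ => k) t y) x /\ ex_derive (fun t => (fun _ _ => k) x t) y.
Proof. split; apply ex_derive_const. Qed.

Lemma pxX x y : px fX x y = 1. Proof. unfold fX. rewrite px_X. auto. Qed.
Lemma pyX x y : py fX x y = 0. Proof. unfold fX. rewrite py_X. auto. Qed.
Lemma pxY x y : px fY x y = 0. Proof. unfold fY. rewrite px_Y. auto. Qed.
Lemma pyY x y : py fY x y = 1. Proof. unfold fY. rewrite py_Y. auto. Qed.


Lemma exG (U : R * R -> Prop) (G : fn2) (HG : Ck_on 2 U G) x y : U (x, y) -> ex_derive (fun t => G t y) x /\ ex_derive (fun t => G x t) y.
Proof. intros Hu. destruct (HG nil x y) as [_ E]; [simpl; lia | exact Hu | apply E; simpl; lia]. Qed.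
Lemma exGx (U : R * R -> Prop) (G : fn2) (HG : Ck_on 2 U G) x y : U (x, y) -> ex_derive (fun t => px G t y) x /\ ex_derive (fun t => px G x t) y.
Proof. intros Hu. destruct (HG [true] x y) as [_ E]; [simpl; lia | exact Hu | apply E; simpl; lia]. Qed.
Lemma exGy (U : R * R -> Prop) (G : fn2) (HG : Ck_on 2 U G) x y : U (x, y) -> ex_derive (fun t => py G t y) x /\ ex_derive (fun t => py G x t) y.
Proof. intros Hu. destruct (HG [false] x y) as [_ E]; [simpl; lia | exact Hu | apply E; simpl; lia]. Qed.

Lemma g4 (U : R * R -> Prop) (G : fn2) (HU : open U) (HG : Ck_on 2 U G) x y : U (x, y) -> px (fmul G fX) x y = px G x y * x + G x y.
Proof. intros Hu. rewrite px_mul; [|apply (proj1 (exG U G HG x y Hu))|apply (proj1 (exX x y))]. rewrite pxX. unfold fX; ring. Qed.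
Lemma g5 (U : R * R -> Prop) (G : fn2) (HU : open U) (HG : Ck_on 2 U G) x y : U (x, y) -> py (fmul G fX) x y = py G x y * x.
Proof. intros Hu. rewrite py_mul; [|apply (proj2 (exG U G HG x y Hu))|apply (proj2 (exX x y))]. rewrite pyX. unfold fX; ring. Qed.
Lemma h4 (U : R * R -> Prop) (G : fn2) (HU : open U) (HG : Ck_on 2 U G) x y : U (x, y) -> px (fmul G fY) x y = px G x y * y.
Proof. intros Hu. rewrite px_mul; [|apply (proj1 (exG U G HG x y Hu))|apply (proj1 (exY x y))]. rewrite pxY. unfold fY; ring. Qed.
Lemma h5 (U : R * R -> Prop) (G : fn2) (HU : open U) (HG : Ck_on 2 U G) x y : U (x, y) -> py (fmul G fY) x y = py G x y * y + G x y.
Proof. intros Hu. rewrite py_mul; [|apply (proj2 (exG U G HG x y Hu))|apply (proj2 (exY x y))]. rewrite pyY. unfold fY; ring. Qed.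

Lemma g1 (U : R * R -> Prop) (G : fn2) (HU : open U) (HG : Ck_on 2 U G) x y : U (x, y) -> px (px (fmul G fX)) x y = px (px G) x y * x + 2 * px G x y.
Proof.
  intros Hu. rewrite (dword_ext U _ (fplus (fmul (px G) fX) G) HU (fun x y Hu => g4 U G HU HG x y Hu) [true]); auto.
  simpl. rewrite px_plus. rewrite px_mul. rewrite pxX. unfold fX; ring.
  apply (proj1 (exGx U G HG x y Hu)). apply (proj1 (exX x y)). 
  apply (ex_derive_mult (fun t => px G t y) (fun t => fX t y)). apply (proj1 (exGx U G HG x y Hu)). apply (proj1 (exX x y)).
  apply (proj1 (exG U G HG x y Hu)).
Qed.
Lemma g2 (U : R * R -> Prop) (G : fn2) (HU : open U) (HG : Ck_on 2 U G) x y : U (x, y) -> px (py (fmul G fX)) x y = px (py G) x y * x + py G x y.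
Proof.
  intros Hu. rewrite (dword_ext U _ (fmul (py G) fX) HU (fun x y Hu => g5 U G HU HG x y Hu) [true]); auto.
  simpl. rewrite px_mul. rewrite pxX. unfold fX; ring.
  apply (proj1 (exGy U G HG x y Hu)). apply (proj1 (exX x y)).
Qed.
Lemma g3 (U : R * R -> Prop) (G : fn2) (HU : open U) (HG : Ck_on 2 U G) x y : U (x, y) -> py (py (fmul G fX)) x y = py (py G) x y * x.
Proof.
  intros Hu. rewrite (dword_ext U _ (fmul (py G) fX) HU (fun x y Hu => g5 U G HU HG x y Hu) [false]); auto.
  simpl. rewrite py_mul. rewrite pyX. unfold fX; ring.
  apply (proj2 (exGy U G HG x y Hu)). apply (proj2 (exX x y)).
Qed.
Lemma h1 (U : R * R -> Prop) (G : fn2) (HU : open U) (HG : Ck_on 2 U G) x y : U (x, y) -> px (px (fmul G fY)) x y = px (px G) x y * y.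
Proof.
  intros Hu. rewrite (dword_ext U _ (fmul (px G) fY) HU (fun x y Hu => h4 U G HU HG x y Hu) [true]); auto.
  simpl. rewrite px_mul. rewrite pxY. unfold fY; ring.
  apply (proj1 (exGx U G HG x y Hu)). apply (proj1 (exY x y)).
Qed.
Lemma h2 (U : R * R -> Prop) (G : fn2) (HU : open U) (HG : Ck_on 2 U G) x y : U (x, y) -> px (py (fmul G fY)) x y = px (py G) x y * y + px G x y.
Proof.
  intros Hu. rewrite (dword_ext U _ (fplus (fmul (py G) fY) G) HU (fun x y Hu => h5 U G HU HG x y Hu) [true]); auto.
  simpl. rewrite px_plus. rewrite px_mul. rewrite pxY. unfold fY; ring.
  apply (proj1 (exGy U G HG x y Hu)). apply (proj1 (exY x y)).
  apply (ex_derive_mult (fun t => py G t y) (fun t => fY t y)). apply (proj1 (exGy U G HG x y Hu)). apply (proj1 (exY x y)).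
  apply (proj1 (exG U G HG x y Hu)).
Qed.
Lemma h3 (U : R * R -> Prop) (G : fn2) (HU : open U) (HG : Ck_on 2 U G) x y : U (x, y) -> py (py (fmul G fY)) x y = py (py G) x y * y + 2 * py G x y.
Proof.
  intros Hu. rewrite (dword_ext U _ (fplus (fmul (py G) fY) G) HU (fun x y Hu => h5 U G HU HG x y Hu) [false]); auto.
  simpl. rewrite py_plus. rewrite py_mul. rewrite pyY. unfold fY; ring.
  apply (proj2 (exGy U G HG x y Hu)). apply (proj2 (exY x y)).
  apply (ex_derive_mult (fun t => py G x t) (fun t => fY x t)). apply (proj2 (exGy U G HG x y Hu)). apply (proj2 (exY x y)).
  apply (proj2 (exG U G HG x y Hu)).
Qed.


Lemma omega_rel a b c d e U w : IsPoly a -> IsPoly b -> IsPoly c -> IsPoly d -> IsPoly e ->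
  symmetry_factor a b c d e U w ->
  forall x y, U (x, y) ->
    px (fmul a w) x y + py (fmul b w) x y = d x y * w x y /\
    px (fmul b w) x y + py (fmul c w) x y = e x y * w x y.
Proof.
  intros Ha Hb Hc Hd He [HU [Hw [_ HS]]] x y Hu.
  assert (C2 : forall f, IsPoly f -> Ck_on 2 U (fmul f w)).
  { intros f Hf. apply Ck_mul; auto. apply Ck_IsPoly; auto. }
  assert (E1 : forall f, fmul f (fmul w (fun _ _ => 1)) = fmul f w).
  { intros f. unfold fmul. do 2 (apply functional_extensionality; intro). ring. }
  assert (EX : forall f, fmul f (fmul w fX) = fmul (fmul f w) fX).
  { intros f. unfold fmul. do 2 (apply functional_extensionality; intro). ring. }
  assert (EY : forall f, fmul f (fmul w fY) = fmul (fmul f w) fY).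
  { intros f. unfold fmul. do 2 (apply functional_extensionality; intro). ring. }
  assert (S1 := HS (fun _ _ => 1) (fun k => Ck_const k U 1) x y Hu).
  assert (SX := HS fX (fun k => Ck_X k U) x y Hu).
  assert (SY := HS fY (fun k => Ck_Y k U) x y Hu).
  rewrite !E1 in S1. rewrite !EX in SX. rewrite !EY in SY.
  unfold Lop in S1, SX, SY.
  rewrite !py_const, !px_const, ?py_const in S1.
  rewrite (g1 U _ HU (C2 a Ha)), (g2 U _ HU (C2 b Hb)), (g3 U _ HU (C2 c Hc)),
          (g4 U _ HU (C2 d Hd)), (g5 U _ HU (C2 e He)) in SX by auto.
  rewrite (h1 U _ HU (C2 a Ha)), (h2 U _ HU (C2 b Hb)), (h3 U _ HU (C2 c Hc)),
          (h4 U _ HU (C2 d Hd)), (h5 U _ HU (C2 e He)) in SY by auto.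
  unfold fX, fY in SX, SY. rewrite !px_X, !py_X, !px_const, !py_const in SX.
  rewrite !px_Y, !py_Y, !px_const, !py_const in SY.
  change (fmul d w x y) with (d x y * w x y) in SX.
  change (fmul e w x y) with (e x y * w x y) in SY.
  set (A := px (px (fmul a w)) x y) in *. set (B := px (py (fmul b w)) x y) in *.
  set (C := py (py (fmul c w)) x y) in *. set (D := px (fmul d w) x y) in *.
  set (E := py (fmul e w) x y) in *.
  assert (S1' : A + 2 * B + C - D - E = 0). rewrite <- S1. ring.
  assert (TX : x * (A + 2 * B + C - D - E) = 0) by (rewrite S1'; ring).
  assert (TY : y * (A + 2 * B + C - D - E) = 0) by (rewrite S1'; ring).
  split; lra.
Qed.

Lemma sum_mult_r (F : nat -> R) c N : sum_f_R0 F N * c = sum_f_R0 (fun j => F j * c) N.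
Proof. rewrite Rmult_comm, scal_sum. reflexivity. Qed.

Lemma px_ext (F G : fn2) x y : (forall s t, F s t = G s t) -> px F x y = px G x y.
Proof. intros H. unfold px. apply Derive_ext. auto. Qed.
Lemma py_ext (F G : fn2) x y : (forall s t, F s t = G s t) -> py F x y = py G x y.
Proof. intros H. unfold py. apply Derive_ext. auto. Qed.

Lemma der_Bx (Pj : nat -> fn2) (f g w : fn2) (Ah : nat -> fn2) N x y :
  (forall j, (j <= N)%nat -> ex_derive (fun t => Pj j t y) x) ->
  ex_derive (fun t => f t y) x -> ex_derive (fun t => g t y) x -> ex_derive (fun t => w t y) x ->
  (forall j, ex_derive (fun t => Ah j t y) x) ->
  px (fun x y => sum_f_R0 (fun j => Pj j x y * (f x y * Ah j x y + g x y * Ah (S j) x y)) N * w x y) x y =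
  sum_f_R0 (fun j => px (Pj j) x y * (f x y * Ah j x y + g x y * Ah (S j) x y)
     + Pj j x y * (px f x y * Ah j x y + f x y * px (Ah j) x y + px g x y * Ah (S j) x y + g x y * px (Ah (S j)) x y)) N * w x y
  + sum_f_R0 (fun j => Pj j x y * (f x y * Ah j x y + g x y * Ah (S j) x y)) N * px w x y.
Proof.
  intros HP Hf Hg Hw HA.
  assert (DS : is_derive (fun s => sum_f_R0 (fun j => Pj j s y * (f s y * Ah j s y + g s y * Ah (S j) s y)) N) x
    (sum_f_R0 (fun j => px (Pj j) x y * (f x y * Ah j x y + g x y * Ah (S j) x y)
     + Pj j x y * (px f x y * Ah j x y + f x y * px (Ah j) x y + px g x y * Ah (S j) x y + g x y * px (Ah (S j)) x y)) N)).
  { apply (is_derive_sum (fun j s => Pj j s y * (f s y * Ah j s y + g s y * Ah (S j) s y))).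
    intros j Hj. auto_derive. repeat split; auto. unfold px. ring. }
  pose proof (is_derive_mult _ _ x _ _ DS (Derive_correct _ _ Hw) Rmult_comm) as DM.
  unfold px at 1. apply is_derive_unique. exact DM.
Qed.

Lemma der_By (Pj : nat -> fn2) (f g w : fn2) (Ah : nat -> fn2) N x y :
  (forall j, (j <= N)%nat -> ex_derive (fun t => Pj j x t) y) ->
  ex_derive (fun t => f x t) y -> ex_derive (fun t => g x t) y -> ex_derive (fun t => w x t) y ->
  (forall j, ex_derive (fun t => Ah j x t) y) ->
  py (fun x y => sum_f_R0 (fun j => Pj j x y * (f x y * Ah j x y + g x y * Ah (S j) x y)) N * w x y) x y =
  sum_f_R0 (fun j => py (Pj j) x y * (f x y * Ah j x y + g x y * Ah (S j) x y)
     + Pj j x y * (py f x y * Ah j x y + f x y * py (Ah j) x y + py g x y * Ah (S j) x y + g x y * py (Ah (S j)) x y)) N * w x y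
  + sum_f_R0 (fun j => Pj j x y * (f x y * Ah j x y + g x y * Ah (S j) x y)) N * py w x y.
Proof.
  intros HP Hf Hg Hw HA.
  assert (DS : is_derive (fun s => sum_f_R0 (fun j => Pj j x s * (f x s * Ah j x s + g x s * Ah (S j) x s)) N) y
    (sum_f_R0 (fun j => py (Pj j) x y * (f x y * Ah j x y + g x y * Ah (S j) x y)
     + Pj j x y * (py f x y * Ah j x y + f x y * py (Ah j) x y + py g x y * Ah (S j) x y + g x y * py (Ah (S j)) x y)) N)).
  { apply (is_derive_sum (fun j s => Pj j x s * (f x s * Ah j x s + g x s * Ah (S j) x s))).
    intros j Hj. auto_derive. repeat split; auto. unfold py. ring. }
  pose proof (is_derive_mult _ _ y _ _ DS (Derive_correct _ _ Hw) Rmult_comm) as DM.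
  unfold py at 1. apply is_derive_unique. exact DM.
Qed.

Lemma rowQ a b c N P Q i x y (v : nat -> R) :
  kron2_spec a b c (S N) Q -> kron2_spec a b c N P -> (i <= N)%nat ->
  sum_f_R0 (fun l => Q i l x y * v l) (S N) = sum_f_R0 (fun j => P i j x y * (a x y * v j + b x y * v (S j))) N /\
  sum_f_R0 (fun l => Q (S i) l x y * v l) (S N) = sum_f_R0 (fun j => P i j x y * (b x y * v j + c x y * v (S j))) N.
Proof.
  intros HQ HP Hi. split.
  - rewrite (transfer N (S N) (fun l => Q i l x y) (fun j => P i j x y) (fun _ => a x y) (fun _ => b x y) (fun _ => 0)).
    + unfold lin3. apply sum_eq; intros; ring.
    + lia.
    + intros; lia.
    + intros t1 t2. rewrite <- HQ by lia. rewrite (Nat.sub_succ_l i N Hi). simpl pow at 1.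
      rewrite Rmult_assoc, (HP i x y t1 t2 Hi), mul_form. reflexivity.
  - rewrite (transfer N (S N) (fun l => Q (S i) l x y) (fun j => P i j x y) (fun _ => b x y) (fun _ => c x y) (fun _ => 0)).
    + unfold lin3. apply sum_eq; intros; ring.
    + lia.
    + intros; lia.
    + intros t1 t2. rewrite <- HQ by lia. simpl (S N - S i)%nat. simpl pow at 2.
      replace ((a x y * t1 + b x y * t2) ^ (N - i) * ((b x y * t1 + c x y * t2) * (b x y * t1 + c x y * t2) ^ i))
        with ((b x y * t1 + c x y * t2) * ((a x y * t1 + b x y * t2) ^ (N - i) * (b x y * t1 + c x y * t2) ^ i)) by ring.
      rewrite (HP i x y t1 t2 Hi), mul_form. reflexivity.
Qed.

Definition Aprime (a b c d e : fn2) (Psi0 Psi1 : nat -> nat -> fn2) (N : nat) (Ah : nat -> fn2) (j : nat) : fn2 :=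
  fun x y =>
    d x y * Ah j x y + e x y * Ah (S j) x y
    + a x y * px (Ah j) x y + b x y * px (Ah (S j)) x y + b x y * py (Ah j) x y + c x y * py (Ah (S j)) x y
    + (ALc N (Psi0 0%nat 0%nat x y - (px a x y + py b x y)) (Psi0 1%nat 1%nat x y - (px a x y + py b x y)) j * Ah j x y
       + BEc N (Psi0 0%nat 1%nat x y) j * Ah (S j) x y + GAc (Psi0 1%nat 0%nat x y) j * Ah (Nat.pred j) x y)
    + (ALc N (Psi1 0%nat 0%nat x y - (px b x y + py c x y)) (Psi1 1%nat 1%nat x y - (px b x y + py c x y)) j * Ah (S j) x y
       + BEc N (Psi1 0%nat 1%nat x y) j * Ah (S (S j)) x y + GAc (Psi1 1%nat 0%nat x y) j * Ah (S (Nat.pred j)) x y).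

Lemma core (a b c d e w : fn2) (Psi0 Psi1 : nat -> nat -> fn2) N (P Q : nat -> nat -> fn2) (Ah : nat -> fn2) i x y :
  IsPoly a -> IsPoly b -> IsPoly c ->
  (forall (r s : nat) (x y : R), (r <= 1)%nat -> (s <= 1)%nat ->
     px (fmul a (Phi2 a b c r s)) x y + py (fmul b (Phi2 a b c r s)) x y =
     sum_f_R0 (fun t => Phi2 a b c r t x y * Psi0 t s x y) 1) ->
  (forall (r s : nat) (x y : R), (r <= 1)%nat -> (s <= 1)%nat ->
     px (fmul b (Phi2 a b c r s)) x y + py (fmul c (Phi2 a b c r s)) x y =
     sum_f_R0 (fun t => Phi2 a b c r t x y * Psi1 t s x y) 1) ->
  kron2_spec a b c (S N) Q -> kron2_spec a b c N P ->
  (forall l, IsPoly (Ah l)) -> (i <= N)%nat ->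
  ex_derive (fun t => w t y) x -> ex_derive (fun t => w x t) y ->
  px (fmul a w) x y + py (fmul b w) x y = d x y * w x y ->
  px (fmul b w) x y + py (fmul c w) x y = e x y * w x y ->
  sum_f_R0 (fun j => P i j x y * Aprime a b c d e Psi0 Psi1 N Ah j x y) N * w x y =
  px (fun x y => sum_f_R0 (fun l => Q i l x y * Ah l x y) (S N) * w x y) x y
  + py (fun x y => sum_f_R0 (fun l => Q (S i) l x y * Ah l x y) (S N) * w x y) x y.
Proof.
  intros Ha Hb Hc H0 H1 HQ HP HAh Hi Ewx Ewy R1 R2.
  assert (HPp : forall l, (l <= N)%nat -> IsPoly (P i l)).
  { intros l Hl. apply (IsPoly_ext (Kr a b c N i l)). intros; symmetry; apply kron_eq; auto.
    apply Kr_poly; auto. }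
  rewrite (px_ext (fun x y => sum_f_R0 (fun l => Q i l x y * Ah l x y) (S N) * w x y)
      (fun x y => sum_f_R0 (fun j => P i j x y * (a x y * Ah j x y + b x y * Ah (S j) x y)) N * w x y)).
  2:{ intros s t. f_equal. apply (rowQ a b c N P Q i s t (fun l => Ah l s t)); auto. }
  rewrite (py_ext (fun x y => sum_f_R0 (fun l => Q (S i) l x y * Ah l x y) (S N) * w x y)
      (fun x y => sum_f_R0 (fun j => P i j x y * (b x y * Ah j x y + c x y * Ah (S j) x y)) N * w x y)).
  2:{ intros s t. f_equal. apply (rowQ a b c N P Q i s t (fun l => Ah l s t)); auto. }
  rewrite der_Bx; auto.
  2: intros; apply IsPoly_exdx; auto.
  2, 3: apply IsPoly_exdx; auto.
  2: intros; apply IsPoly_exdx; auto.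
  rewrite der_By; auto.
  2: intros; apply IsPoly_exdy; auto.
  2, 3: apply IsPoly_exdy; auto.
  2: intros; apply IsPoly_exdy; auto.
  rewrite px_mul in R1, R2 by (auto; apply IsPoly_exdx; auto).
  rewrite py_mul in R1, R2 by (auto; apply IsPoly_exdy; auto).
  assert (K1 := D_kron a b c a b Psi0 N P x y i Ha Hb Hc Ha Hb H0 HP Hi (fun l => Ah l x y)).
  assert (K2 := D_kron a b c b c Psi1 N P x y i Ha Hb Hc Hb Hc H1 HP Hi (fun l => Ah (S l) x y)).
  unfold lin3 in K1, K2.
  unfold Aprime.
  transitivity (sum_f_R0 (fun j => P i j x y * (d x y * Ah j x y + e x y * Ah (S j) x y
    + a x y * px (Ah j) x y + b x y * px (Ah (S j)) x y + b x y * py (Ah j) x y + c x y * py (Ah (S j)) x y)) N * w x y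
    + sum_f_R0 (fun l => (a x y * px (P i l) x y + b x y * py (P i l) x y) * Ah l x y) N * w x y
    + sum_f_R0 (fun l => (b x y * px (P i l) x y + c x y * py (P i l) x y) * Ah (S l) x y) N * w x y).
  { rewrite K1, K2. rewrite <- !Rmult_plus_distr_r. f_equal. rewrite <- !sum_plus. apply sum_eq. intros; ring. }
  rewrite !sum_mult_r. rewrite <- !sum_plus. apply sum_eq. intros j Hj.
  apply Rminus_diag_uniq.
  set (ax := px a x y) in *. set (bx := px b x y) in *. set (cx := px c x y) in *.
  set (ay := py a x y) in *. set (by_ := py b x y) in *. set (cy := py c x y) in *.
  set (wx := px w x y) in *. set (wy := py w x y) in *. set (w0 := w x y) in *.
  set (a0 := a x y) in *. set (b0 := b x y) in *. set (c0 := c x y) in *. set (d0 := d x y) in *. set (e0 := e x y) in *.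
  transitivity (P i j x y * Ah j x y * (d0 * w0 - (ax * w0 + a0 * wx + (by_ * w0 + b0 * wy)))
              + P i j x y * Ah (S j) x y * (e0 * w0 - (bx * w0 + b0 * wx + (cy * w0 + c0 * wy)))).
  ring. rewrite R1, R2. ring.
Qed.

Lemma Ck_sum k U N (f : nat -> fn2) : open U -> (forall j, (j <= N)%nat -> Ck_on k U (f j)) ->
  Ck_on k U (fun x y => sum_f_R0 (fun j => f j x y) N).
Proof.
  intros HU. induction N as [|N IH]; intros H; simpl.
  - apply H; lia.
  - apply (Ck_plus k U (fun x y => sum_f_R0 (fun j => f j x y) N) (f (S N))); auto.
Qed.

Lemma Poly_plus' k (f g : fn2) : Poly k f -> Poly k g -> Poly k (fun x y => f x y + g x y).
Proof. apply Poly_plus. Qed.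
Lemma Poly_mul' k1 k2 k (f g : fn2) : (k1 + k2 <= k)%nat -> Poly k1 f -> Poly k2 g -> Poly k (fun x y => f x y * g x y).
Proof. intros Hk H1 H2. apply (Poly_mono (k1 + k2)); auto. apply Poly_mul; auto. Qed.

Lemma Poly_dx_mul D (g f : fn2) : Poly 2 g -> Poly D f -> Poly (D + 1) (fun x y => g x y * px f x y).
Proof.
  intros Hg Hf. destruct D as [|D].
  - apply (Poly_ext 1 (fun _ _ => 0)). intros; rewrite Poly0_px; auto; ring. apply Poly_const.
  - apply (Poly_mul' 2 D); [lia|auto|]. apply Poly_px; auto.
Qed.
Lemma Poly_dy_mul D (g f : fn2) : Poly 2 g -> Poly D f -> Poly (D + 1) (fun x y => g x y * py f x y).
Proof.
  intros Hg Hf. destruct D as [|D].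
  - apply (Poly_ext 1 (fun _ _ => 0)). intros; rewrite Poly0_py; auto; ring. apply Poly_const.
  - apply (Poly_mul' 2 D); [lia|auto|]. apply Poly_py; auto.
Qed.

Lemma Poly_ALc N (p1 p2 : fn2) (a b : fn2) (j : nat) : Poly 1 p1 -> Poly 1 p2 -> Poly 2 a -> Poly 2 b ->
  Poly 1 (fun x y => ALc N (p1 x y - (px a x y + py b x y)) (p2 x y - (px a x y + py b x y)) j).
Proof.
  intros H1 H2 Ha Hb. unfold ALc.
  assert (Hs : Poly 1 (fun x y => px a x y + py b x y)).
  { apply Poly_plus'; [apply Poly_px|apply Poly_py]; auto. }
  apply Poly_plus'.
  - apply (Poly_mul' 0 1); auto. apply Poly_const.
    apply (Poly_ext 1 (fun x y => p1 x y + (-1) * (px a x y + py b x y))). intros; ring.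
    apply Poly_plus'; auto. apply (Poly_mul' 0 1); auto. apply Poly_const.
  - apply (Poly_mul' 0 1); auto. apply Poly_const.
    apply (Poly_ext 1 (fun x y => p2 x y + (-1) * (px a x y + py b x y))). intros; ring.
    apply Poly_plus'; auto. apply (Poly_mul' 0 1); auto. apply Poly_const.
Qed.

Theorem lemma7p2 (a b c d e omega : R -> R -> R) (U : R * R -> Prop)
  (Psi0 Psi1 : nat -> nat -> R -> R -> R) (n m D : nat)
  (Phin Phin1 A : nat -> nat -> R -> R -> R) :
  is_poly_le 2 a -> is_poly_le 2 b -> is_poly_le 2 c ->
  is_poly_le 1 d -> is_poly_le 1 e ->
  symmetry_factor a b c d e U omega ->
  (forall r s : nat, (r <= 1)%nat -> (s <= 1)%nat ->
     is_poly_le 1 (Psi0 r s) /\ is_poly_le 1 (Psi1 r s)) ->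
  (forall (r s : nat) (x y : R), (r <= 1)%nat -> (s <= 1)%nat ->
     px (fmul a (Phi2 a b c r s)) x y + py (fmul b (Phi2 a b c r s)) x y =
     sum_f_R0 (fun t => Phi2 a b c r t x y * Psi0 t s x y) 1) ->
  (forall (r s : nat) (x y : R), (r <= 1)%nat -> (s <= 1)%nat ->
     px (fmul b (Phi2 a b c r s)) x y + py (fmul c (Phi2 a b c r s)) x y =
     sum_f_R0 (fun t => Phi2 a b c r t x y * Psi1 t s x y) 1) ->
  (1 <= n)%nat ->
  Ck_on n U omega ->
  kron2_spec a b c n Phin ->
  kron2_spec a b c (n - 1) Phin1 ->
  (forall i j : nat, (i <= n)%nat -> (j <= m)%nat -> is_poly_le D (A i j)) ->
  exists A' : nat -> nat -> R -> R -> R,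
    (forall i j : nat, (i <= n - 1)%nat -> (j <= m)%nat -> is_poly_le (D + 1) (A' i j)) /\
    (forall (k : nat) (x y : R), (k <= m)%nat -> U (x, y) ->
       divn n (fun i => matPAw n Phin A omega i k) x y =
       divn (n - 1) (fun i => matPAw (n - 1) Phin1 A' omega i k) x y).
Proof.
  intros Ha Hb Hc Hd He Hsym HPsi H0 H1 Hn Hw HQ HP HA.
  destruct n as [|N]; [lia|]. replace (S N - 1)%nat with N in * by lia.
  apply is_poly_Poly in Ha, Hb, Hc, Hd, He.
  assert (ia : IsPoly a) by (exists 2%nat; auto).
  assert (ib : IsPoly b) by (exists 2%nat; auto).
  assert (ic : IsPoly c) by (exists 2%nat; auto).
  assert (id : IsPoly d) by (exists 1%nat; auto).
  assert (ie : IsPoly e) by (exists 1%nat; auto).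
  pose proof Hsym as [HU [Hw2 _]].
  set (Ahat := fun k l => if Nat.leb l (S N) then A l k else (fun _ _ : R => 0)).
  assert (HAh : forall k, (k <= m)%nat -> forall l, Poly D (Ahat k l)).
  { intros k Hk l. unfold Ahat. destruct (Nat.leb l (S N)) eqn:E.
    - apply is_poly_Poly, HA; auto. apply Nat.leb_le; auto.
    - apply Poly_const. }
  assert (HAhE : forall k l, (l <= S N)%nat -> Ahat k l = A l k).
  { intros k l Hl. unfold Ahat. rewrite (proj2 (Nat.leb_le l (S N)) Hl). reflexivity. }
  exists (fun j k => Aprime a b c d e Psi0 Psi1 N (Ahat k) j).
  split.
  - intros i k Hi Hk. apply Poly_is_poly. unfold Aprime.
    assert (HPs : forall r s, (r <= 1)%nat -> (s <= 1)%nat -> Poly 1 (Psi0 r s) /\ Poly 1 (Psi1 r s)).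
    { intros r s Hr Hs. destruct (HPsi r s Hr Hs). split; apply is_poly_Poly; auto. }
    destruct (HPs 0%nat 0%nat) as [P000 P100]; try lia.
    destruct (HPs 0%nat 1%nat) as [P001 P101]; try lia.
    destruct (HPs 1%nat 0%nat) as [P010 P110]; try lia.
    destruct (HPs 1%nat 1%nat) as [P011 P111]; try lia.
    repeat apply Poly_plus'.
    all: try (apply (Poly_mul' 1 D); [lia|auto|auto]; fail).
    all: try (apply Poly_dx_mul; auto; fail).
    all: try (apply Poly_dy_mul; auto; fail).
    all: try (apply (Poly_mul' 1 D); [lia| |auto]; apply Poly_ALc; auto; fail).
    all: try (apply (Poly_mul' 1 D); [lia| |auto]; unfold BEc, GAc; apply (Poly_mul' 0 1); auto; apply Poly_const; fail).
  - intros k x y Hk Hu.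
    apply (divn_step N U (fun i => matPAw (S N) Phin A omega i k)
                         (fun i => matPAw N Phin1 (fun j k => Aprime a b c d e Psi0 Psi1 N (Ahat k) j) omega i k) HU); auto.
    + intros i Hi. unfold matPAw.
      apply (Ck_mul (S N) U (fun x y => sum_f_R0 (fun j => Phin i j x y * A j k x y) (S N)) omega); auto.
      apply (Ck_sum (S N) U (S N) (fun j => fun x y => Phin i j x y * A j k x y)); auto.
      intros j Hj. apply (Ck_mul (S N) U (Phin i j) (A j k)); auto.
      * apply Ck_IsPoly; auto. apply (IsPoly_ext (Kr a b c (S N) i j)).
        intros; symmetry; apply kron_eq; auto. apply Kr_poly; auto.
      * apply Ck_IsPoly; auto. exists D. apply is_poly_Poly, HA; auto.
    + intros i x' y' Hi Hu'. unfold matPAw.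
      rewrite (px_ext (fun x y => sum_f_R0 (fun j => Phin i j x y * A j k x y) (S N) * omega x y)
                      (fun x y => sum_f_R0 (fun l => Phin i l x y * Ahat k l x y) (S N) * omega x y)).
      2:{ intros s t. f_equal. apply sum_eq. intros l Hl. rewrite HAhE; auto. }
      rewrite (py_ext (fun x y => sum_f_R0 (fun j => Phin (S i) j x y * A j k x y) (S N) * omega x y)
                      (fun x y => sum_f_R0 (fun l => Phin (S i) l x y * Ahat k l x y) (S N) * omega x y)).
      2:{ intros s t. f_equal. apply sum_eq. intros l Hl. rewrite HAhE; auto. }
      destruct (omega_rel a b c d e U omega ia ib ic id ie Hsym x' y' Hu') as [R1 R2].
      destruct (Hw2 nil x' y') as [_ Ew]; [simpl; lia|auto|].
      destruct (Ew ltac:(simpl; lia)) as [Ewx Ewy].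
      apply (core a b c d e omega Psi0 Psi1 N Phin1 Phin (Ahat k) i x' y'); auto.
      intros l. exists D. apply HAh; auto.
Qed.
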